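(* In the linear setting of the context with $\theta>0$ and $\lambda=(1-\sigma)\kappa$, for all $t\ge0$, $$\frac{d}{dt}V(x(t))\le(\sigma-1)\kappa V(x(t))+\frac{1}{\theta}\Big(V(x(0))e^{(\sigma-1)\kappa t}-V(x(t))\Big).$$
   Context: Consider $\dot x=Ax+Bu$, $x\in\mathbb{R}^n$, $u\in\mathbb{R}^m$, and a gain $K$ such that $A+BK$ is Hurwitz; let $P,Q$ be symmetric positive definite with $(A+BK)^\top P+P(A+BK)=-Q$, $V(x)=x^\top Px$, and $\kappa>0$ with $Q\ge\kappa P$. The input is $u(t)=Kx(t_i)$ for $t\in[t_i,t_{i+1})$, with $e(t)=x(t_i)-x(t)$, so $\dot x=Ax+BK(x+e)$. $g(t^-)$ is the left limit. Dynamic event generator with parameters $\sigma\in(0,1)$, $\lambda>0$, $\theta\ge0$: $\dot\eta=-\lambda\eta+\sigma x^\top Qx-2x^\top PBKe$, $\eta(0)=0$; $t_0=0$, $t_{i+1}=\inf\{t>t_i:\ \eta(t)+\theta(\sigma x(t)^\top Qx(t)-2x(t)^\top PBKe(t^-))\le0\}$. Assume $x(t_i)\ne0$ for all $i$. *)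

(* Defs.v *)
(* classical reals (derivatives, exp).
   Vectors in R^n are functions nat -> R (only indices < n matter);
   matrices are functions nat -> nat -> R (only the relevant index ranges matter). *)
From Stdlib Require Import Reals Lra Lia.
Open Scope R_scope.

Definition vec := nat -> R.
Definition mat := nat -> nat -> R.

Fixpoint vsum (n : nat) (f : nat -> R) : R :=
  match n with
  | O => 0
  | S k => vsum k f + f k
  end.

Definition mv (c : nat) (M : mat) (v : vec) : vec :=
  fun i => vsum c (fun j => M i j * v j).

Definition dot (n : nat) (v w : vec) : R := vsum n (fun i => v i * w i).

Definition quad (n : nat) (M : mat) (v : vec) : R := dot n v (mv n M v).

Definition vnonzero (n : nat) (v : vec) : Prop := exists k, (k < n)%nat /\ v k <> 0.

Definition symmetric (n : nat) (M : mat) : Prop :=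
  forall i j, (i < n)%nat -> (j < n)%nat -> M i j = M j i.

Definition posdef (n : nat) (M : mat) : Prop :=
  symmetric n M /\ forall v, vnonzero n v -> 0 < quad n M v.

Definition loewner_ge_scaled (n : nat) (Q : mat) (kappa : R) (P : mat) : Prop :=
  forall v, kappa * quad n P v <= quad n Q v.

(* M (n x n) is Hurwitz: every (complex) eigenvalue a + i b, with eigenvector
   vr + i vi <> 0, has negative real part.  M (vr + i vi) = (a + i b)(vr + i vi)
   is written out in real and imaginary parts. *)
Definition hurwitz (n : nat) (M : mat) : Prop :=
  forall (a b : R) (vr vi : vec),
    (exists k, (k < n)%nat /\ (vr k <> 0 \/ vi k <> 0)) ->
    (forall k, (k < n)%nat ->
       mv n M vr k = a * vr k - b * vi k /\ mv n M vi k = b * vr k + a * vi k) ->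
    a < 0.

Definition Acl (m : nat) (A B K : mat) : mat :=
  fun i j => A i j + vsum m (fun l => B i l * K l j).

(* (A+BK)^T P + P (A+BK) = - Q, entrywise *)
Definition lyapunov_eq (n m : nat) (A B K P Q : mat) : Prop :=
  forall i j, (i < n)%nat -> (j < n)%nat ->
    vsum n (fun l => Acl m A B K l i * P l j)
    + vsum n (fun l => P i l * Acl m A B K l j) = - Q i j.

Definition right_deriv (f : R -> R) (t l : R) : Prop :=
  forall eps, 0 < eps -> exists delta, 0 < delta /\
    forall h, 0 < h < delta -> Rabs ((f (t + h) - f t) / h - l) < eps.

Definition left_lim_vec (n : nat) (g : R -> vec) (t : R) (l : vec) : Prop :=
  forall k, (k < n)%nat ->
    forall eps, 0 < eps -> exists delta, 0 < delta /\
      forall r, t - delta < r < t -> Rabs (g r k - l k) < eps.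

(* Event times t_0, t_1, ...: [nev = None] means infinitely many events,
   [nev = Some N] means exactly the events t_0, ..., t_N (then t_{N+1} = +oo). *)
Definition ev_valid (nev : option nat) (i : nat) : Prop :=
  match nev with None => True | Some N => (i <= N)%nat end.
Definition ev_has_next (nev : option nat) (i : nat) : Prop :=
  match nev with None => True | Some N => (i < N)%nat end.

Definition in_interval (nev : option nat) (ts : nat -> R) (i : nat) (t : R) : Prop :=
  ev_valid nev i /\ ts i <= t /\ (ev_has_next nev i -> t < ts (S i)).

Definition is_inf (S : R -> Prop) (m : R) : Prop :=
  (forall s, S s -> m <= s) /\ (forall b, (forall s, S s -> b <= s) -> b <= m).

Definition xPBKw (n m : nat) (P B K : mat) (x w : vec) : R :=
  dot n x (mv n P (mv m B (mv n K w))).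

Definition closed_loop (n m : nat) (A B K P Q : mat) (sigma lambda theta : R)
  (x e : R -> vec) (eta : R -> R) (ts : nat -> R) (nev : option nat) : Prop :=
  ts O = 0 /\ eta 0 = 0 /\
  (forall i t k, in_interval nev ts i t -> (k < n)%nat -> e t k = x (ts i) k - x t k) /\
  (forall i t, in_interval nev ts i t -> 0 < t ->
     continuity_pt eta t /\ forall k, (k < n)%nat -> continuity_pt (fun s => x s k) t) /\
  (forall i t k, in_interval nev ts i t -> (k < n)%nat ->
     let d := mv n A (x t) k + mv m B (mv n K (x (ts i))) k in
     right_deriv (fun s => x s k) t d /\
     (ts i < t -> derivable_pt_lim (fun s => x s k) t d)) /\
  (forall i t, in_interval nev ts i t ->
     let d := - lambda * eta t + sigma * quad n Q (x t) - 2 * xPBKw n m P B K (x t) (e t) in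
     right_deriv eta t d /\ (ts i < t -> derivable_pt_lim eta t d)) /\
  (* event rule: t_{i+1} = inf { t > t_i : eta(t) + theta (sigma x^T Q x - 2 x^T P B K e(t^-)) <= 0 },
     the infimum of the empty set being +oo (no further event). *)
  (forall i, ev_valid nev i ->
     let Trig := fun s => ts i < s /\ exists l, left_lim_vec n e s l /\
                eta s + theta * (sigma * quad n Q (x s) - 2 * xPBKw n m P B K (x s) l) <= 0 in
     (ev_has_next nev i -> is_inf Trig (ts (S i))) /\
     (~ ev_has_next nev i -> forall s, ~ Trig s)).

(* Main.v *)
Require Import Defs.
From Stdlib Require Import Reals Lra Lia Classical.
Open Scope R_scope.

Lemma vsum_ext N f g : (forall k, (k < N)%nat -> f k = g k) -> vsum N f = vsum N g.
Proof. induction N; simpl; intros H; auto. rewrite IHN by (intros; apply H; lia). rewrite H by lia. reflexivity. Qed.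
Lemma vsum_plus N f g : vsum N (fun k => f k + g k) = vsum N f + vsum N g.
Proof. induction N; simpl; [ring|]. rewrite IHN; ring. Qed.
Lemma vsum_scal N c f : vsum N (fun k => c * f k) = c * vsum N f.
Proof. induction N; simpl; [ring|]. rewrite IHN; ring. Qed.
Lemma vsum_opp N f : vsum N (fun k => - f k) = - vsum N f.
Proof. induction N; simpl; [ring|]. rewrite IHN; ring. Qed.
Lemma vsum_zero N : vsum N (fun _ => 0) = 0.
Proof. induction N; simpl; [ring|]. rewrite IHN; ring. Qed.
Lemma vsum_swap N M F : vsum N (fun i => vsum M (fun j => F i j)) = vsum M (fun j => vsum N (fun i => F i j)).
Proof. induction N; simpl. symmetry; apply vsum_zero. rewrite IHN. rewrite <- vsum_plus. reflexivity. Qed.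

Lemma dot_double n u M v : dot n u (mv n M v) = vsum n (fun i => vsum n (fun j => u i * M i j * v j)).
Proof. unfold dot, mv. apply vsum_ext; intros. rewrite <- vsum_scal. apply vsum_ext; intros; ring. Qed.

Lemma dot_sym n P x d : symmetric n P -> dot n x (mv n P d) = dot n d (mv n P x).
Proof. intros HS. rewrite !dot_double, vsum_swap. apply vsum_ext; intros i Hi. apply vsum_ext; intros j Hj.
 rewrite (HS j i) by auto. ring. Qed.

Lemma mv_Acl n m A B K x k : mv n A x k + mv m B (mv n K x) k = mv n (Acl m A B K) x k.
Proof. unfold mv, Acl. 
 transitivity (vsum n (fun j => A k j * x j) + vsum n (fun j => vsum m (fun l => B k l * K l j * x j))).
 f_equal. rewrite vsum_swap. apply vsum_ext; intros. rewrite <- vsum_scal. apply vsum_ext; intros; ring.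
 rewrite <- vsum_plus. apply vsum_ext; intros. rewrite Rmult_plus_distr_r, (Rmult_comm (vsum _ _)), <- vsum_scal. f_equal. apply vsum_ext; intros; ring. Qed.

Lemma lyap_quad n m A B K P Q x : lyapunov_eq n m A B K P Q ->
  dot n (mv n (Acl m A B K) x) (mv n P x) + dot n x (mv n P (mv n (Acl m A B K) x)) = - quad n Q x.
Proof. intros HL. set (C := Acl m A B K).
 assert (E1 : dot n (mv n C x) (mv n P x) = vsum n (fun i => vsum n (fun j => x i * x j * vsum n (fun l => C l i * P l j)))).
 { rewrite dot_double. unfold mv.
   transitivity (vsum n (fun l => vsum n (fun j => vsum n (fun i => C l i * x i * P l j * x j)))).
   apply vsum_ext; intros l _; apply vsum_ext; intros j _. rewrite Rmult_assoc, Rmult_comm, <- vsum_scal. apply vsum_ext; intros; ring.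
   transitivity (vsum n (fun l => vsum n (fun i => vsum n (fun j => C l i * x i * P l j * x j)))).
   apply vsum_ext; intros. apply vsum_swap.
   rewrite vsum_swap.
   apply vsum_ext; intros i _. rewrite vsum_swap. apply vsum_ext; intros j _. rewrite <- vsum_scal. apply vsum_ext; intros; ring. }
 assert (E2 : dot n x (mv n P (mv n C x)) = vsum n (fun i => vsum n (fun j => x i * x j * vsum n (fun l => P i l * C l j)))).
 { rewrite dot_double. unfold mv.
   transitivity (vsum n (fun i => vsum n (fun l => vsum n (fun j => x i * P i l * C l j * x j)))).
   apply vsum_ext; intros i _; apply vsum_ext; intros l _. rewrite <- vsum_scal. apply vsum_ext; intros; ring.
   apply vsum_ext; intros i _. rewrite vsum_swap. apply vsum_ext; intros j _. rewrite <- vsum_scal. apply vsum_ext; intros; ring. }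
 rewrite E1, E2, <- vsum_plus. unfold quad. rewrite dot_double. rewrite <- vsum_opp.
 apply vsum_ext; intros i Hi. rewrite <- vsum_plus, <- vsum_opp. apply vsum_ext; intros j Hj.
 pose proof (HL i j Hi Hj) as Hij. unfold C. rewrite <- Rmult_plus_distr_l, Hij. ring. Qed.

Lemma deriv_alg n m A B K P Q (x xi e : vec) d : symmetric n P -> lyapunov_eq n m A B K P Q ->
  (forall k, (k < n)%nat -> e k = xi k - x k) ->
  (forall k, (k < n)%nat -> d k = mv n A x k + mv m B (mv n K xi) k) ->
  dot n d (mv n P x) + dot n x (mv n P d) = - quad n Q x + 2 * xPBKw n m P B K x e.
Proof. intros HS HL He Hd. set (u := mv n (Acl m A B K) x). set (v := mv m B (mv n K e)).
 assert (Hd' : forall k, (k < n)%nat -> d k = u k + v k).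
 { intros k Hk. rewrite Hd by auto. unfold u, v. rewrite <- mv_Acl.
   assert (mv m B (mv n K xi) k = mv m B (mv n K x) k + mv m B (mv n K e) k).
   { unfold mv at 1 3 5. rewrite <- vsum_plus. apply vsum_ext; intros l _. rewrite <- Rmult_plus_distr_l. f_equal.
     unfold mv. rewrite <- vsum_plus. apply vsum_ext; intros j Hj. rewrite He by auto. ring. }
   lra. }
 assert (D1 : dot n d (mv n P x) = dot n u (mv n P x) + dot n v (mv n P x)).
 { unfold dot. rewrite <- vsum_plus. apply vsum_ext; intros. rewrite Hd' by auto. ring. }
 assert (D2 : dot n x (mv n P d) = dot n x (mv n P u) + dot n x (mv n P v)).
 { unfold dot. rewrite <- vsum_plus. apply vsum_ext; intros. rewrite <- Rmult_plus_distr_l. f_equal.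
   unfold mv. rewrite <- vsum_plus. apply vsum_ext; intros. rewrite Hd' by auto. ring. }
 rewrite D1, D2. rewrite <- (dot_sym n P x v HS). unfold u. pose proof (lyap_quad n m A B K P Q x HL).
 unfold xPBKw. fold v. lra. Qed.

Definition RD f t l := limit1_in (fun h => (f (t+h) - f t)/h) (fun h => 0<h) l 0.

Lemma rd_iff f t l : right_deriv f t l <-> RD f t l.
Proof. unfold right_deriv, RD, limit1_in, limit_in; simpl; unfold Rdist. split.
- intros H eps Heps. destruct (H eps Heps) as [d [Hd H']]. exists d; split; [lra|].
  intros h [Hh1 Hh2]. apply H'. rewrite Rminus_0_r, Rabs_right in Hh2 by lra. lra.
- intros H eps Heps. destruct (H eps Heps) as [d [Hd H']]. exists d; split; [lra|].
  intros h Hh. apply H'. split; [lra|]. rewrite Rminus_0_r, Rabs_right by lra. lra.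
Qed.

Lemma limit1_in_ext f g D l x0 : (forall h, D h -> f h = g h) -> limit1_in f D l x0 -> limit1_in g D l x0.
Proof. unfold limit1_in, limit_in. intros E H eps He. destruct (H eps He) as [a [Ha H']]. exists a; split; auto.
 intros y [Dy Hy]. rewrite <- E by auto. apply H'; auto. Qed.

Lemma rd_l f t l l' : right_deriv f t l -> l = l' -> right_deriv f t l'.
Proof. intros H ->; auto. Qed.

Lemma rd_const c t : right_deriv (fun _ => c) t 0.
Proof. intros eps He. exists 1; split; [lra|]. intros h Hh. replace ((c - c)/h - 0) with 0 by (field; lra). rewrite Rabs_R0; lra. Qed.

Lemma rd_plus f g t lf lg : right_deriv f t lf -> right_deriv g t lg -> right_deriv (fun s => f s + g s) t (lf + lg).
Proof. rewrite !rd_iff. unfold RD. intros Hf Hg. eapply limit1_in_ext; [|apply limit_plus; [exact Hf|exact Hg]].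
 intros h Hh; simpl. field. lra. Qed.

Lemma rd_mult f g t lf lg : right_deriv f t lf -> right_deriv g t lg -> right_deriv (fun s => f s * g s) t (lf * g t + f t * lg).
Proof. rewrite !rd_iff. unfold RD. intros Hf Hg.
 assert (Hc : limit1_in (fun h => g t + h * ((g (t+h) - g t)/h)) (fun h => 0<h) (g t + 0 * lg) 0).
 { apply limit_plus. apply (limit_free g). apply limit_mul; [apply lim_x|exact Hg]. }
 rewrite Rmult_0_l, Rplus_0_r in Hc.
 eapply limit1_in_ext; [|apply limit_plus; [apply limit_mul; [exact Hf|exact Hc]| apply limit_mul; [apply (limit_free f)|exact Hg]]].
 intros h Hh; simpl. field. lra. Qed.

Lemma rd_dpl f t l : derivable_pt_lim f t l -> right_deriv f t l.
Proof. intros H eps He. destruct (H eps He) as [d Hd]. exists d; split; [apply cond_pos|].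
 intros h Hh. apply Hd; [lra|]. rewrite Rabs_right; lra. Qed.

Lemma rd_vsum N F dF t : (forall i, (i < N)%nat -> right_deriv (fun s => F s i) t (dF i)) ->
  right_deriv (fun s => vsum N (F s)) t (vsum N dF).
Proof. induction N; intros H; simpl. apply rd_const. apply rd_plus; [apply IHN; intros; apply H; lia| apply H; lia]. Qed.

Lemma dpl_vsum N F dF t : (forall i, (i < N)%nat -> derivable_pt_lim (fun s => F s i) t (dF i)) ->
  derivable_pt_lim (fun s => vsum N (F s)) t (vsum N dF).
Proof. induction N; intros H; simpl. apply derivable_pt_lim_const.
 apply (derivable_pt_lim_plus (fun s => vsum N (F s)) (fun s => F s N)); [apply IHN; intros; apply H; lia| apply H; lia]. Qed.

Lemma cont_vsum N F t : (forall i, (i < N)%nat -> continuity_pt (fun s => F s i) t) ->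
  continuity_pt (fun s => vsum N (F s)) t.
Proof. induction N; intros H; simpl. apply continuity_pt_const; intros ? ?; auto.
 apply (continuity_pt_plus (fun s => vsum N (F s)) (fun s => F s N)); [apply IHN; intros; apply H; lia| apply H; lia]. Qed.

Lemma quad_rd n P (x : R -> vec) t d : (forall k, (k < n)%nat -> right_deriv (fun s => x s k) t (d k)) ->
  right_deriv (fun s => quad n P (x s)) t (dot n d (mv n P (x t)) + dot n (x t) (mv n P d)).
Proof. intros H. unfold quad, dot. rewrite <- vsum_plus.
 apply (rd_vsum n (fun s i => x s i * mv n P (x s) i)). intros i Hi.
 eapply rd_l. apply rd_mult. apply H; auto. unfold mv. apply (rd_vsum n (fun s j => P i j * x s j) (fun j => P i j * d j)).
 intros j Hj. eapply rd_l. apply rd_mult. apply rd_const. apply H; auto. cbv beta; ring. reflexivity. Qed.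

Lemma quad_dpl n P (x : R -> vec) t d : (forall k, (k < n)%nat -> derivable_pt_lim (fun s => x s k) t (d k)) ->
  derivable_pt_lim (fun s => quad n P (x s)) t (dot n d (mv n P (x t)) + dot n (x t) (mv n P d)).
Proof. intros H. unfold quad, dot. rewrite <- vsum_plus.
 apply (dpl_vsum n (fun s i => x s i * mv n P (x s) i)). intros i Hi.
 apply (derivable_pt_lim_mult (fun s => x s i) (fun s => mv n P (x s) i)). apply H; auto.
 unfold mv. apply (dpl_vsum n (fun s j => P i j * x s j) (fun j => P i j * d j)).
 intros j Hj. apply (derivable_pt_lim_scal (fun s => x s j)). apply H; auto. Qed.

Lemma quad_cont n P (x : R -> vec) t : (forall k, (k < n)%nat -> continuity_pt (fun s => x s k) t) ->
  continuity_pt (fun s => quad n P (x s)) t.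
Proof. intros H. unfold quad, dot.
 apply (cont_vsum n (fun s i => x s i * mv n P (x s) i)). intros i Hi.
 apply (continuity_pt_mult (fun s => x s i) (fun s => mv n P (x s) i)). apply H; auto.
 unfold mv. apply (cont_vsum n (fun s j => P i j * x s j)).
 intros j Hj. apply (continuity_pt_scal (fun s => x s j)). apply H; auto. Qed.

Lemma rd_pos f t D : right_deriv f t D -> 0 < D -> exists dl, 0 < dl /\ forall u, t < u < t + dl -> f t < f u.
Proof. intros H HD. destruct (H D HD) as [d [Hd H']]. exists d; split; auto. intros u Hu.
 specialize (H' (u - t) ltac:(lra)). replace (t + (u - t)) with u in H' by ring.
 apply Rabs_def2 in H'. destruct H' as [H1 H2].
 assert (0 < (f u - f t) / (u - t)) by lra.
 assert (0 < f u - f t). { replace (f u - f t) with ((f u - f t)/(u-t) * (u - t)) by (field; lra). apply Rmult_lt_0_compat; lra. }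
 lra. Qed.

Lemma right_ind (f : R -> R) a b : a <= b -> 0 <= f a ->
  (forall s, a < s <= b -> continuity_pt f s) ->
  (forall s, a <= s < b -> 0 <= f s -> exists dl, 0 < dl /\ forall u, s < u < s + dl -> 0 <= f u) ->
  forall s, a <= s <= b -> 0 <= f s.
Proof. intros Hab Ha Hc Hr.
 set (E := fun c => a <= c <= b /\ forall u, a <= u <= c -> 0 <= f u).
 assert (HB : bound E). { exists b. intros c [Hc' _]; lra. }
 assert (HE : exists c, E c). { exists a. split; [lra|]. intros u Hu. replace u with a by lra; auto. }
 destruct (completeness E HB HE) as [c [Hub Hlub]].
 assert (Hac : a <= c) by (apply Hub; destruct HE; unfold E; split; [lra|intros u Hu; replace u with a by lra; auto]).
 assert (Hcb : c <= b) by (apply Hlub; intros z [Hz _]; lra).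
 assert (Hbelow : forall u, a <= u < c -> 0 <= f u).
 { intros u Hu. destruct (Rle_or_lt 0 (f u)) as [?|Hneg]; auto. exfalso.
   assert (Hup : forall z, E z -> z <= u).
   { intros z [Hz Hz']. destruct (Rle_or_lt z u); auto. specialize (Hz' u ltac:(lra)). lra. }
   specialize (Hlub u Hup). lra. }
 assert (Hfc : 0 <= f c).
 { destruct (Req_dec c a) as [->|Hne]; auto.
   destruct (Rle_or_lt 0 (f c)) as [?|Hneg]; auto. exfalso.
   specialize (Hc c ltac:(lra)). unfold continuity_pt, continue_in, limit1_in, limit_in in Hc. simpl in Hc. unfold Rdist in Hc.
   destruct (Hc (- f c) ltac:(lra)) as [al [Hal Hal']].
   set (u := Rmax a (c - al/2)).
   assert (Hu1 : a <= u) by apply Rmax_l. assert (Hu2 : c - al/2 <= u) by apply Rmax_r.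
   assert (Hu3 : u < c) by (unfold u; apply Rmax_lub_lt; lra).
   specialize (Hal' u). assert (Rabs (f u - f c) < - f c).
   { apply Hal'. split. split; [exact I|lra]. rewrite Rabs_left by lra. lra. }
   specialize (Hbelow u ltac:(lra)). apply Rabs_def2 in H. lra. }
 assert (Hall : forall u, a <= u <= c -> 0 <= f u).
 { intros u Hu. destruct (Req_dec u c) as [->|]; auto. apply Hbelow; lra. }
 destruct (Req_dec c b) as [->|Hne].
 - intros s Hs. apply Hall; lra.
 - exfalso. destruct (Hr c ltac:(lra) Hfc) as [dl [Hdl Hdl']].
   set (z := Rmin b (c + dl/2)).
   assert (z <= b) by apply Rmin_l. assert (z <= c + dl/2) by apply Rmin_r.
   assert (c < z) by (unfold z; apply Rmin_glb_lt; lra).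
   assert (E z). { split; [lra|]. intros u Hu. destruct (Rle_or_lt u c). apply Hall; lra. apply Hdl'; lra. }
   specialize (Hub z H2). lra.
Qed.

Lemma lin_dpl c s : derivable_pt_lim (fun s => c * s) s (c * 1).
Proof. apply (derivable_pt_lim_scal id c s 1). apply derivable_pt_lim_id. Qed.

Lemma exp_dpl c s : derivable_pt_lim (fun s => exp (c * s)) s (exp (c * s) * (c * 1)).
Proof. apply (derivable_pt_lim_comp (fun s => c * s) exp). apply lin_dpl. apply derivable_pt_lim_exp. Qed.

Lemma dpl_cont f s l : derivable_pt_lim f s l -> continuity_pt f s.
Proof. intros H. apply derivable_continuous_pt. exists l; exact H. Qed.

Lemma eps_le a b t : 0 <= t -> (forall eps, 0 < eps -> a <= b + eps * t) -> a <= b.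
Proof. intros Ht H. destruct (Rle_or_lt a b); auto. exfalso.
 specialize (H ((a - b)/(t+1)) ltac:(apply Rdiv_lt_0_compat; lra)).
 assert ((a-b)/(t+1) * t < a - b).
 { apply (Rmult_lt_reg_r (t+1)); [lra|]. replace ((a-b)/(t+1)*t*(t+1)) with ((a-b)*t) by (field; lra). nra. }
 lra. Qed.

Lemma valid_mono nev j k : (j <= k)%nat -> ev_valid nev k -> ev_valid nev j.
Proof. destruct nev; simpl; auto; lia. Qed.
Lemma next_valid nev j : ev_has_next nev j -> ev_valid nev (S j).
Proof. destruct nev; simpl; auto; lia. Qed.
Lemma valid_S nev j : ev_valid nev (S j) -> ev_valid nev j /\ ev_has_next nev j.
Proof. destruct nev; simpl; auto; lia. Qed.
Lemma valid_lt_next nev j i : (j < i)%nat -> ev_valid nev i -> ev_has_next nev j.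
Proof. destruct nev; simpl; auto; lia. Qed.

Lemma mv_zero c M (v : vec) : (forall j, (j < c)%nat -> v j = 0) -> forall i, mv c M v i = 0.
Proof. intros H i. unfold mv. rewrite <- (vsum_zero c). apply vsum_ext; intros j Hj. rewrite H by auto. ring. Qed.

Theorem mainTheorem7 (n m : nat) (A B K P Q : mat) (kappa sigma lambda theta : R)
  (x e : R -> vec) (eta : R -> R) (ts : nat -> R) (nev : option nat) :
  hurwitz n (Acl m A B K) ->
  posdef n P -> posdef n Q ->
  lyapunov_eq n m A B K P Q ->
  0 < kappa -> loewner_ge_scaled n Q kappa P ->
  0 < sigma < 1 -> 0 < theta -> lambda = (1 - sigma) * kappa ->
  closed_loop n m A B K P Q sigma lambda theta x e eta ts nev ->
  (forall i, ev_valid nev i -> vnonzero n (x (ts i))) ->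
  forall i t, in_interval nev ts i t ->
    exists D,
      right_deriv (fun s => quad n P (x s)) t D /\
      (ts i < t -> derivable_pt_lim (fun s => quad n P (x s)) t D) /\
      D <= (sigma - 1) * kappa * quad n P (x t)
           + / theta * (quad n P (x 0) * exp ((sigma - 1) * kappa * t) - quad n P (x t)).
Proof.
intros HH HP HQ HL Hkap Hlo Hs Hth Hlam Hcl Hnz i t Hin.
destruct Hcl as (Hts0 & Heta0 & He & Hcont & Hxd & Hetad & Htrig).
destruct HP as [HPs HPp]. destruct HQ as [HQs HQp].
assert (Hmono : forall j, ev_valid nev j -> ev_has_next nev j -> ts j <= ts (S j)).
{ intros j Hv Hn. destruct (Htrig j Hv) as [H1 _]. cbv zeta in H1. destruct (H1 Hn) as [_ Hglb].
  apply Hglb. intros s [Hs' _]. lra. }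
assert (Hnn : forall j, ev_valid nev j -> 0 <= ts j).
{ induction j; intros Hv. lra. destruct (valid_S _ _ Hv) as [Hv' Hn].
  specialize (IHj Hv'). specialize (Hmono j Hv' Hn). lra. }
assert (Ht0 : 0 <= t).
{ destruct Hin as (Hv & Hti & _). specialize (Hnn i Hv). lra. }
assert (Hcov : forall s, 0 <= s <= t -> exists j, in_interval nev ts j s).
{ intros s Hs0. destruct Hin as (Hvi & Hti & Hni).
  assert (Hd : forall d j, (j + d = i)%nat -> ts j <= s -> exists j', in_interval nev ts j' s).
  { induction d; intros j Hjd Hj.
    - exists j. replace j with i in * by lia. split; [auto|split; [lra|]]. intros Hn; specialize (Hni Hn); lra.
    - destruct (Rlt_or_le s (ts (S j))) as [Hlt|Hge].
      + exists j. split. apply (valid_mono _ j i); [lia|auto]. split; [auto|]. intros _; auto.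
      + apply (IHd (S j)); [lia|auto]. }
  apply (Hd i 0%nat); [lia| rewrite Hts0; lra]. }
assert (HdV : forall j s, in_interval nev ts j s ->
  right_deriv (fun s => quad n P (x s)) s (- quad n Q (x s) + 2 * xPBKw n m P B K (x s) (e s)) /\
  (ts j < s -> derivable_pt_lim (fun s => quad n P (x s)) s (- quad n Q (x s) + 2 * xPBKw n m P B K (x s) (e s)))).
{ intros j s Hjs.
  assert (Heq : dot n (fun k => mv n A (x s) k + mv m B (mv n K (x (ts j))) k) (mv n P (x s))
     + dot n (x s) (mv n P (fun k => mv n A (x s) k + mv m B (mv n K (x (ts j))) k))
     = - quad n Q (x s) + 2 * xPBKw n m P B K (x s) (e s)).
  { apply (deriv_alg n m A B K P Q (x s) (x (ts j)) (e s)); auto. }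
  rewrite <- Heq. split.
  - apply quad_rd. intros k Hk0. pose proof (Hxd j s k Hjs Hk0) as H; cbv zeta in H. apply H.
  - intros Hlt. apply quad_dpl. intros k Hk0. pose proof (Hxd j s k Hjs Hk0) as H; cbv zeta in H. apply H; auto. }
assert (Hcs : forall s, 0 < s <= t -> continuity_pt eta s /\ continuity_pt (fun s => quad n P (x s)) s).
{ intros s Hs'. destruct (Hcov s ltac:(lra)) as [j Hj]. destruct (Hcont j s Hj ltac:(lra)) as [H1 H2].
  split; auto. apply quad_cont; auto. }
assert (HkeyP : forall j s, in_interval nev ts j s -> 0 <= eta s ->
   0 < eta s + theta * (sigma * quad n Q (x s) - 2 * xPBKw n m P B K (x s) (e s))).
{ intros j s Hjs Heta. pose proof Hjs as [Hv [Htj Hnx]].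
  destruct (Rle_lt_or_eq_dec _ _ Htj) as [Hlt|Heq].
  - assert (Hs0 : 0 < s) by (pose proof (Hnn j Hv); lra).
    destruct (Hcont j s Hjs Hs0) as [_ Hxc].
    assert (HLL : left_lim_vec n e s (e s)).
    { intros k Hk eps Heps. specialize (Hxc k Hk).
      unfold continuity_pt, continue_in, limit1_in, limit_in in Hxc; simpl in Hxc; unfold Rdist in Hxc.
      destruct (Hxc eps Heps) as [al [Hal Hal']]. exists (Rmin al (s - ts j)). split. apply Rmin_glb_lt; lra.
      intros r Hr. assert (Rmin al (s - ts j) <= al) by apply Rmin_l.
      assert (Rmin al (s - ts j) <= s - ts j) by apply Rmin_r.
      assert (Hrin : in_interval nev ts j r). { split; auto. split; [lra|]. intros Hn. specialize (Hnx Hn). lra. }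
      rewrite (He j r k Hrin Hk), (He j s k Hjs Hk).
      replace (x (ts j) k - x r k - (x (ts j) k - x s k)) with (- (x r k - x s k)) by ring. rewrite Rabs_Ropp.
      apply Hal'. split. split; [exact I|lra]. rewrite Rabs_left; lra. }
    destruct (Rlt_or_le 0 (eta s + theta * (sigma * quad n Q (x s) - 2 * xPBKw n m P B K (x s) (e s)))) as [?|Hle]; auto.
    exfalso.
    destruct (Htrig j Hv) as [T1 T2]. cbv zeta in T1, T2.
    assert (HT : ts j < s /\ exists l, left_lim_vec n e s l /\
       eta s + theta * (sigma * quad n Q (x s) - 2 * xPBKw n m P B K (x s) l) <= 0).
    { split; auto. exists (e s); auto. }
    destruct (classic (ev_has_next nev j)) as [Hn|Hn].
    + destruct (T1 Hn) as [Hlb _]. specialize (Hlb s HT). specialize (Hnx Hn). lra.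
    + apply (T2 Hn s HT).
  - assert (H1 : forall l, mv n K (e s) l = 0).
    { apply mv_zero. intros k Hk. rewrite (He j s k Hjs Hk), Heq. ring. }
    assert (H2 : forall l, mv m B (mv n K (e s)) l = 0) by (apply mv_zero; intros; apply H1).
    assert (H3 : forall l, mv n P (mv m B (mv n K (e s))) l = 0) by (apply mv_zero; intros; apply H2).
    assert (H4 : xPBKw n m P B K (x s) (e s) = 0).
    { unfold xPBKw, dot. rewrite <- (vsum_zero n). apply vsum_ext; intros. rewrite H3; ring. }
    rewrite H4. assert (Hq : 0 < quad n Q (x s)).
    { apply HQp. rewrite <- Heq. apply Hnz; auto. }
    assert (0 < theta * sigma * quad n Q (x s)).
    { apply Rmult_lt_0_compat; [apply Rmult_lt_0_compat|]; lra. }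
    nra. }

assert (Heta_nn : forall s, 0 <= s <= t -> 0 <= eta s).
{ assert (Hh : forall s, 0 <= s <= t -> 0 <= eta s * exp ((lambda + / theta) * s)).
  { apply (right_ind (fun s => eta s * exp ((lambda + / theta) * s)) 0 t); cbv beta.
    - lra.
    - rewrite Heta0; lra.
    - intros s Hs'. destruct (Hcs s Hs') as [H1 _].
      apply (continuity_pt_mult eta (fun s => exp ((lambda + / theta) * s))); auto.
      eapply dpl_cont; apply exp_dpl.
    - intros s Hs' Hpos. pose proof (exp_pos ((lambda + / theta) * s)) as HE.
      assert (Hes : 0 <= eta s).
      { destruct (Rle_or_lt 0 (eta s)) as [?|Hng]; auto. exfalso.
        assert (eta s * exp ((lambda + / theta) * s) < 0) by (apply Rmult_neg_pos; auto). lra. }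
      destruct (Hcov s ltac:(lra)) as [j Hj].
      pose proof (HkeyP j s Hj Hes) as Hkp.
      pose proof (Hetad j s Hj) as Hd; cbv zeta in Hd; destruct Hd as [Hd _].
      pose proof (rd_mult _ _ _ _ _ Hd (rd_dpl _ _ _ (exp_dpl (lambda + / theta) s))) as HR.
      cbv beta in HR.
      set (a := sigma * quad n Q (x s) - 2 * xPBKw n m P B K (x s) (e s)) in *.
      set (E := exp ((lambda + / theta) * s)) in *.
      assert (Hpd : 0 < (- lambda * eta s + sigma * quad n Q (x s) - 2 * xPBKw n m P B K (x s) (e s)) * E + eta s * (E * ((lambda + / theta) * 1))).
      { replace ((- lambda * eta s + sigma * quad n Q (x s) - 2 * xPBKw n m P B K (x s) (e s)) * E + eta s * (E * ((lambda + / theta) * 1)))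
          with (E * / theta * (eta s + theta * a)) by (unfold a; field; lra).
        apply Rmult_lt_0_compat; auto. apply Rmult_lt_0_compat; auto. apply Rinv_0_lt_compat; auto. }
      destruct (rd_pos _ _ _ HR Hpd) as [dl [Hdl Hdl']]. exists dl; split; auto.
      intros u Hu; specialize (Hdl' u Hu). cbv beta in Hdl'. unfold E in *. lra. }
  intros s Hs'. specialize (Hh s Hs'). pose proof (exp_pos ((lambda + / theta) * s)) as HE.
  destruct (Rle_or_lt 0 (eta s)) as [?|Hng]; auto. exfalso.
  assert (eta s * exp ((lambda + / theta) * s) < 0) by (apply Rmult_neg_pos; auto). lra. }
assert (Hg : (quad n P (x t) + eta t) * exp (lambda * t) <= (quad n P (x 0) + eta 0) * exp (lambda * 0)).
{ apply (eps_le _ _ t Ht0). intros eps Heps.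
  assert (Hf : forall s, 0 <= s <= t -> 0 <= (quad n P (x 0) + eta 0) * exp (lambda * 0) + eps * s
        + -1 * ((quad n P (x s) + eta s) * exp (lambda * s))).
  { apply (right_ind (fun s => (quad n P (x 0) + eta 0) * exp (lambda * 0) + eps * s
        + -1 * ((quad n P (x s) + eta s) * exp (lambda * s))) 0 t); cbv beta.
    - lra.
    - rewrite Rmult_0_r. lra.
    - intros s Hs'. destruct (Hcs s Hs') as [H1 H2].
      apply (continuity_pt_plus (fun s => (quad n P (x 0) + eta 0) * exp (lambda * 0) + eps * s)
                (fun s => -1 * ((quad n P (x s) + eta s) * exp (lambda * s)))).
      + apply (continuity_pt_plus (fun _ => (quad n P (x 0) + eta 0) * exp (lambda * 0)) (fun s => eps * s)).
        apply continuity_pt_const; intros ? ?; auto. eapply dpl_cont; apply lin_dpl.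
      + apply (continuity_pt_scal (fun s => (quad n P (x s) + eta s) * exp (lambda * s))).
        apply (continuity_pt_mult (fun s => quad n P (x s) + eta s) (fun s => exp (lambda * s))).
        apply (continuity_pt_plus (fun s => quad n P (x s)) eta); auto.
        eapply dpl_cont; apply exp_dpl.
    - intros s Hs' Hpos. destruct (Hcov s ltac:(lra)) as [j Hj].
      destruct (HdV j s Hj) as [HV _].
      pose proof (Hetad j s Hj) as Hd; cbv zeta in Hd; destruct Hd as [Hd _].
      pose proof (rd_mult _ _ _ _ _ (rd_plus _ _ _ _ _ HV Hd) (rd_dpl _ _ _ (exp_dpl lambda s))) as HR.
      pose proof (rd_plus _ _ _ _ _
        (rd_plus _ _ _ _ _ (rd_const ((quad n P (x 0) + eta 0) * exp (lambda * 0)) s) (rd_dpl _ _ _ (lin_dpl eps s)))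
        (rd_mult _ _ _ _ _ (rd_const (-1) s) HR)) as HF.
      cbv beta in HF.
      pose proof (exp_pos (lambda * s)) as HE.
      set (E := exp (lambda * s)) in *.
      pose proof (Hlo (x s)) as Hl.
      assert (Hpd : 0 < 0 + eps * 1 + (0 * ((quad n P (x s) + eta s) * E) + -1 *
          ((- quad n Q (x s) + 2 * xPBKw n m P B K (x s) (e s) +
          (- lambda * eta s + sigma * quad n Q (x s) - 2 * xPBKw n m P B K (x s) (e s))) * E +
          (quad n P (x s) + eta s) * (E * (lambda * 1))))).
      { replace (0 + eps * 1 + (0 * ((quad n P (x s) + eta s) * E) + -1 *
          ((- quad n Q (x s) + 2 * xPBKw n m P B K (x s) (e s) +
          (- lambda * eta s + sigma * quad n Q (x s) - 2 * xPBKw n m P B K (x s) (e s))) * E +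
          (quad n P (x s) + eta s) * (E * (lambda * 1)))))
        with (eps + E * ((1 - sigma) * (quad n Q (x s) - kappa * quad n P (x s)))) by (rewrite Hlam; ring).
        assert (0 <= E * ((1 - sigma) * (quad n Q (x s) - kappa * quad n P (x s)))).
        { apply Rmult_le_pos; [lra|]. apply Rmult_le_pos; lra. }
        lra. }
      destruct (rd_pos _ _ _ HF Hpd) as [dl [Hdl Hdl']]. exists dl; split; auto.
      intros u Hu; specialize (Hdl' u Hu). cbv beta in Hdl'. unfold E in *. lra. }
  specialize (Hf t ltac:(lra)). lra. }
rewrite Heta0, Rmult_0_r, exp_0, Rplus_0_r, Rmult_1_r in Hg.
assert (HW : quad n P (x t) + eta t <= quad n P (x 0) * exp (- lambda * t)).
{ pose proof (exp_pos (- lambda * t)) as HE.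
  replace (quad n P (x t) + eta t) with ((quad n P (x t) + eta t) * exp (lambda * t) * exp (- lambda * t)).
  apply Rmult_le_compat_r; lra.
  rewrite Rmult_assoc, <- exp_plus. replace (lambda * t + - lambda * t) with 0 by ring. rewrite exp_0; ring. }
exists (- quad n Q (x t) + 2 * xPBKw n m P B K (x t) (e t)).
destruct (HdV i t Hin) as [H1 H2]. split; [exact H1|split; [exact H2|]].
pose proof (HkeyP i t Hin (Heta_nn t ltac:(lra))) as Hkp.
pose proof (Hlo (x t)) as Hl.
replace ((sigma - 1) * kappa * t) with (- lambda * t) by (rewrite Hlam; ring).
set (a := sigma * quad n Q (x t) - 2 * xPBKw n m P B K (x t) (e t)) in *.
set (y := / theta * (quad n P (x 0) * exp (- lambda * t) - quad n P (x t))).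
assert (Hy : theta * y = quad n P (x 0) * exp (- lambda * t) - quad n P (x t)) by (unfold y; field; lra).
assert (Hya : - a <= y) by nra.
replace (- quad n Q (x t) + 2 * xPBKw n m P B K (x t) (e t)) with (- (1 - sigma) * quad n Q (x t) - a) by (unfold a; ring).
nra.
Qed.
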